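(* Let $(X_n,\|\cdot\|_n)_{n\ge1}$ be a sequence of Banach spaces and $(X,\|\cdot\|)$ the space defined in the context. Let $(x_m)_{m\ge1}$ be a bounded sequence in $X$ and $x\in X\setminus\{0\}$ with $x_m\overset{p}{\to}x$. Then there exists an infinite subset $M\subseteq\mathbb{N}$ such that the norms of the vectors of the set $\{x_m:m\in M\}\cup\{x\}$ have the same representation.
   Context: $c_{00}((X_n))$ is the vector space of sequences $(x_1,x_2,\dots)$ with $x_k\in X_k$ and only finitely many $x_k\ne0$; $(x_1,\dots,x_n)$ denotes $(x_1,\dots,x_n,0,0,\dots)$. On $c_{00}((X_n))$ define inductively $\|(x_1)\|=\|x_1\|_1$ (the norm of $X_1$) and, for $n\ge2$, $$\|(x_1,\dots,x_n)\|=\Big(1-\tfrac{1}{n+1}\Big)\big(\|x_n\|_n+\|(x_1,\dots,x_{n-1})\|\big)+\tfrac{1}{n+1}\max\Big\{\tfrac{\|x_n\|_n}{n},\ \|(x_1,\dots,x_{n-1})\|\Big\}.$$ $X$ is the completion of $(c_{00}((X_n)),\|\cdot\|)$, identified with the space of sequences $x=(x_n)$, $x_n\in X_n$, with $\sum_n\|x_n\|_n<\infty$, where $\|x\|=\lim_k\|(x_1,\dots,x_k)\|$. For a sequence $x_m=(x_{m1},x_{m2},\dots)\in X$ and $x=(x_1,x_2,\dots)\in X$, write $x_m\overset{p}{\to}x$ (pointwise convergence) if $\|x_{mn}-x_n\|_n\to0$ as $m\to\infty$ for every $n\in\mathbb{N}$. Two vectors $x=(x_n),y=(y_n)\in X$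 have norms with the same representation if there exist sequences $(d_n)_{n\ge1},(s_n)_{n\ge1}\subseteq(0,1]$ with $\|x\|=\sum_n d_n\|x_n\|_n$, $\|y\|=\sum_n s_n\|y_n\|_n$ and $d_n=s_n$ for every $n$; the norms of the vectors of a set have the same representation if there is a single sequence $(d_n)\subseteq(0,1]$ with $\|z\|=\sum_n d_n\|z_n\|_n$ for every $z$ in the set. *)

(* Defs.v *)
From HB Require Import structures.
From mathcomp Require Import all_boot all_order all_algebra.
From mathcomp Require Import all_classical all_reals all_analysis.
Set Implicit Arguments. Unset Strict Implicit. Unset Printing Implicit Defensive.
Import Order.TTheory GRing.Theory Num.Theory.
Import numFieldNormedType.Exports.
Local Open Scope classical_set_scope.
Local Open Scope ring_scope.

(* Indexing convention: component k : nat (k >= 0) of a vector corresponds to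
   the paper's coordinate n = k+1, living in the space X k (= paper's X_{k+1}). *)

(* Given the coordinate norms a k = ||x_{k+1}||_{k+1}, [tnorm a k] is the
   paper's ||(x_1,...,x_{k+1})||, defined by the paper's recursion. *)
Fixpoint tnorm (R : realType) (a : nat -> R) (k : nat) : R :=
  match k with
  | 0 => a 0%N
  | k'.+1 =>
      let n : R := (k'.+2)%:R in (* paper index n = k+1 = k'+2 *)
      (1 - (n + 1)^-1) * (a k'.+1 + tnorm a k')
      + (n + 1)^-1 * Num.max (a k'.+1 / n) (tnorm a k')
  end.

Definition inX (R : realType) (X : nat -> normedModType R) (x : forall k, X k) : Prop :=
  cvgn (series (fun k => `|x k|)).

Definition Xnorm (R : realType) (X : nat -> normedModType R) (x : forall k, X k) : R :=
  lim (tnorm (fun k => `|x k|) k @[k --> \oo]).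

Definition pconv (R : realType) (X : nat -> normedModType R)
  (xs : nat -> forall k, X k) (x : forall k, X k) : Prop :=
  forall k, (`|xs m k - x k| @[m --> \oo] --> (0 : R)).

Definition same_repr (R : realType) (X : nat -> normedModType R)
  (S : set (forall k, X k)) : Prop :=
  exists d : nat -> R, (forall k, 0 < d k <= 1) /\
    forall z, S z -> series (fun k => d k * `|z k|) @ \oo --> Xnorm z.

(* Main.v *)
Require Import Defs.
From HB Require Import structures.
From mathcomp Require Import all_boot all_order all_algebra.
From mathcomp Require Import all_classical all_reals all_analysis.
From mathcomp Require Import ring lra.
Import Order.TTheory GRing.Theory Num.Theory.
Import numFieldNormedType.Exports.
Local Open Scope classical_set_scope.
Local Open Scope ring_scope.

Section Aux.
Variable R : realType.
Implicit Types (a : nat -> R) (p : nat -> bool).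

Definition nn (t : nat) : R := (t.+2)%:R.
Definition qq (t : nat) : R := (nn t + 1)^-1.

Lemma tnormS a t : tnorm a t.+1 =
  (1 - qq t) * (a t.+1 + tnorm a t) + qq t * Num.max (a t.+1 / nn t) (tnorm a t).
Proof. by []. Qed.

Lemma nn_ge2 t : 2 <= nn t.
Proof. by rewrite /nn ler_nat. Qed.

Lemma qq_gt0 t : 0 < qq t.
Proof. rewrite /qq invr_gt0; have := nn_ge2 t; lra. Qed.

Lemma qq_le t : qq t <= 1/3.
Proof.
have h := nn_ge2 t; have h1 := qq_gt0 t.
have e : qq t * (nn t + 1) = 1 by rewrite /qq mulVf // gt_eqF //; lra.
nra.
Qed.

Lemma inv_nn_gt0 t : 0 < (nn t)^-1.
Proof. rewrite invr_gt0; have := nn_ge2 t; lra. Qed.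

Lemma inv_nn_le t : (nn t)^-1 <= 1/2.
Proof.
have h := nn_ge2 t.
have h1 : 0 < (nn t)^-1 by rewrite invr_gt0; lra.
have e : (nn t)^-1 * nn t = 1 by rewrite mulVf // gt_eqF //; lra.
have h2 : 0 <= (nn t)^-1 * (nn t - 2) by apply: mulr_ge0; [exact: ltW|lra].
rewrite mulrBr e in h2.
move: h2; generalize (nn t)^-1 => y; lra.
Qed.


Definition compatb (v : bool) a t : Prop :=
  if v then tnorm a t <= a t.+1 / nn t else a t.+1 / nn t <= tnorm a t.

Definition cc p t : R := if p t then 1 - qq t else 1.
Definition ee p t : R := if p t then (1 - qq t) + qq t / nn t else 1 - qq t.

Lemma step p a t : compatb (p t) a t ->
  tnorm a t.+1 = cc p t * tnorm a t + ee p t * a t.+1.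
Proof.
rewrite tnormS /compatb /cc /ee; case: (p t) => h.
  rewrite max_l //; ring.
rewrite max_r //; ring.
Qed.

Lemma cc_bnd p t : 0 < cc p t <= 1.
Proof.
rewrite /cc; have h1 := qq_gt0 t; have h2 := qq_le t; case: (p t);
  move: h1 h2; generalize (qq t) => y; lra.
Qed.

Lemma ee_bnd p t : 0 < ee p t <= 1.
Proof.
rewrite /ee; have h1 := qq_gt0 t; have h2 := qq_le t.
have h3 := inv_nn_le t; have h4 := inv_nn_gt0 t.
have h5 : 0 < qq t / nn t by rewrite mulr_gt0.
have h6 : qq t / nn t <= qq t * (1/2) by rewrite ler_wpM2l // ltW.
case: (p t); move: h1 h2 h5 h6; generalize (qq t) => z; generalize (z / nn t) => y; lra.
Qed.


Lemma max_facts (u v : R) : u <= Num.max u v /\ v <= Num.max u v /\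
  (forall w, u <= w -> v <= w -> Num.max u v <= w).
Proof.
split; first by rewrite le_max lexx.
split; first by rewrite le_max lexx orbT.
by move=> w h1 h2; rewrite ge_max h1 h2.
Qed.

Lemma div_nn_le a t : 0 <= a t.+1 -> a t.+1 / nn t <= a t.+1.
Proof.
move=> h; have h3 := inv_nn_le t; have h4 := inv_nn_gt0 t.
have : a t.+1 * (nn t)^-1 <= a t.+1 * (1/2) by rewrite ler_wpM2l.
move: h; generalize (a t.+1 * (nn t)^-1) => y; generalize (a t.+1) => z; lra.
Qed.

Lemma gen_facts (y a T m : R) : 0 < y -> y <= 1/3 -> 0 <= a -> 0 <= T ->
  T <= m -> m <= a + T ->
  [/\ T <= (1 - y) * (a + T) + y * m, a <= 2 * ((1 - y) * (a + T) + y * m)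
   & (1 - y) * (a + T) + y * m <= T + a].
Proof.
move=> h1 h2 h3 h4 h5 h6.
have k1 : y * T <= y * m by rewrite ler_wpM2l // ltW.
have k2 : y * m <= y * (a + T) by rewrite ler_wpM2l // ltW.
have k3 : 0 <= y * a by rewrite mulr_ge0 // ltW.
have k4 : y * a <= (1/3) * a by rewrite ler_wpM2r.
split; nra.
Qed.

Lemma step_facts a t : (forall i, 0 <= a i) -> 0 <= tnorm a t ->
  [/\ tnorm a t <= tnorm a t.+1, a t.+1 <= 2 * tnorm a t.+1
   & tnorm a t.+1 <= tnorm a t + a t.+1].
Proof.
move=> a0 T0.
have [m1 [m2 m3]] := max_facts (a t.+1 / nn t) (tnorm a t).
have hd := div_nn_le a t (a0 t.+1).
have hw1 : a t.+1 / nn t <= a t.+1 + tnorm a t.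
  by apply: (le_trans hd); rewrite lerDl.
have hw2 : tnorm a t <= a t.+1 + tnorm a t by rewrite lerDr.
have := gen_facts _ _ _ _ (qq_gt0 t) (qq_le t) (a0 t.+1) T0 m2 (m3 _ hw1 hw2).
by rewrite -tnormS.
Qed.

Lemma tnorm_ge0 a t : (forall i, 0 <= a i) -> 0 <= tnorm a t.
Proof.
move=> a0; elim: t => [|t IH]; first exact: a0.
have [h _ _] := step_facts a t a0 IH; exact: le_trans h.
Qed.


Fixpoint w p t i : R := match t with
  | 0 => if i == 0%N then 1 else 0
  | t'.+1 => if i == t'.+1 then ee p t' else cc p t' * w p t' i end.

Lemma w_bnd p t i : (i <= t)%N -> 0 < w p t i <= 1.
Proof.
elim: t => [|t IH].
  by rewrite leqn0 => /eqP ->; rewrite /= ltr01 lexx.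
rewrite /=; case: eqP => [_ _|/eqP ne]; first exact: ee_bnd.
rewrite leq_eqVlt (negbTE ne) /= ltnS => /IH /andP[h1 h2].
have /andP[c1 c2] := cc_bnd p t.
by rewrite mulr_gt0 //= mulr_ile1 // ltW.
Qed.

Lemma repr p a t : (forall s, (s < t)%N -> compatb (p s) a s) ->
  tnorm a t = \sum_(i < t.+1) w p t i * a i.
Proof.
elim: t => [|t IH] H.
  by rewrite big_ord_recr big_ord0 /= add0r mul1r.
rewrite (@step p a t (H t (ltnSn t))) IH; last by move=> s hs; apply: H; exact: ltnW.
rewrite [in RHS]big_ord_recr /= eqxx mulr_sumr; congr (_ + _).
apply: eq_bigr => i _ /=.
by rewrite ltn_eqF ?mulrA // ltnS ltnW.
Qed.

Definition d p N i : R := if (i <= N)%N then w p N i else ee p i.-1.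

Lemma d_bnd p N i : 0 < d p N i <= 1.
Proof. rewrite /d; case: ifP => h; [exact: w_bnd | exact: ee_bnd]. Qed.

Lemma repr_tail p a N k : (forall s, compatb (p s) a s) ->
  (forall s, (N <= s)%N -> p s = false) ->
  tnorm a (N + k) = \sum_(i < (N + k).+1) d p N i * a i.
Proof.
move=> H Hp; elim: k => [|k IH].
  rewrite addn0 (@repr p a N (fun s _ => H s)); apply: eq_bigr => i _.
  by rewrite /d -ltnS ltn_ord.
rewrite addnS (@step p a _ (H _)) IH [in RHS]big_ord_recr /=; congr (_ + _).
  by rewrite /cc Hp ?leq_addr // mul1r.
by rewrite /d ltnNge leq_addr.
Qed.

Lemma series_repr p N a : (forall i, 0 <= a i) -> cvgn (series a) ->
  (forall s, compatb (p s) a s) -> (forall s, (N <= s)%N -> p s = false) ->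
  series (fun k => d p N k * a k) @ \oo --> lim (tnorm a k @[k --> \oo]).
Proof.
move=> a0 ca H Hp.
set u := fun k => d p N k * a k.
have u0 : forall k, 0 <= u k.
  by move=> k; rewrite /u mulr_ge0 // ltW //; case/andP: (d_bnd p N k).
have ua : forall k, u k <= a k.
  move=> k; rewrite /u; have /andP[_ h] := d_bnd p N k.
  by rewrite -[leRHS]mul1r ler_wpM2r.
have cu : cvgn (series u) by apply: series_le_cvg ca.
have eqT : forall t, (N <= t)%N -> tnorm a t = series u t.+1.
  move=> t Nt; rewrite -(subnKC Nt) (@repr_tail p a N (t - N) H Hp) /series /=.
  by rewrite big_mkord.
have Tcv : tnorm a @ \oo --> limn (series u).
  have h : [sequence series u n.+1]_n @ \oo --> limn (series u).
    by rewrite cvg_shiftS; exact: cu.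
  apply: cvg_trans h; apply: near_eq_cvg; exists N => // t /= Nt.
  by rewrite eqT.
by rewrite (cvg_lim _ Tcv).
Qed.


Lemma tnorm_lim a : (forall i, 0 <= a i) -> cvgn (series a) ->
  cvgn (tnorm a) /\ forall t, tnorm a t <= lim (tnorm a k @[k --> \oo]).
Proof.
move=> a0 ca.
have nd : nondecreasing_seq (tnorm a).
  apply/nondecreasing_seqP => n.
  by have [h _ _] := step_facts a n a0 (tnorm_ge0 a n a0).
have ndS : nondecreasing_seq (series a).
  by apply/nondecreasing_seqP => n; rewrite seriesSr lerDl.
have le1 : forall t, tnorm a t <= series a t.+1.
  elim => [|t IH]; first by rewrite /series /= big_nat1.
  have [_ _ h] := step_facts a t a0 (tnorm_ge0 a t a0).
  by rewrite seriesSr (le_trans h) // lerD2r.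
have ub : has_ubound (range (tnorm a)).
  exists (limn (series a)) => _ [t _ <-].
  exact: le_trans (le1 t) (nondecreasing_cvgn_le ndS ca _).
have cT := nondecreasing_cvgn nd ub.
have cv : cvgn (tnorm a) by apply/cvg_ex; exists (sup (range (tnorm a))).
by split => // t; apply: nondecreasing_cvgn_le.
Qed.

Lemma tnorm_cvg (a : nat -> nat -> R) (b : nat -> R) :
  (forall i, a m i @[m --> \oo] --> b i) ->
  forall t, tnorm (a m) t @[m --> \oo] --> tnorm b t.
Proof.
move=> H; elim => [|t IH]; first exact: H.
have e : forall (c : nat -> R), tnorm c t.+1 =
  (1 - qq t) * (c t.+1 + tnorm c t) + qq t *
  ((c t.+1 / nn t + tnorm c t + `|c t.+1 / nn t - tnorm c t|) / 2).
  by move=> c; rewrite tnormS maxr_absE.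
under eq_fun => m do rewrite e.
rewrite e.
apply: cvgD; apply: cvgM; try exact: cvg_cst.
- by apply: cvgD; [exact: H | exact: IH].
- apply: cvgM; last exact: cvg_cst.
  apply: cvgD; first apply: cvgD.
  + by apply: cvgM; [exact: H | exact: cvg_cst].
  + exact: IH.
  + apply: cvg_norm; apply: cvgB; last exact: IH.
    by apply: cvgM; [exact: H | exact: cvg_cst].
Qed.

Lemma half_le a k t : (forall i, 0 <= a i) -> (k <= t)%N -> a k <= 2 * tnorm a t.
Proof.
move=> a0 kt.
have nd : nondecreasing_seq (tnorm a).
  apply/nondecreasing_seqP => n.
  by have [h _ _] := step_facts a n a0 (tnorm_ge0 a n a0).
have h1 : a k <= 2 * tnorm a k.
  case: k {kt} => [|k] /=; first by have := a0 0%N; lra.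
  by have [_ h _] := step_facts a k a0 (tnorm_ge0 a k a0).
apply: (le_trans h1); rewrite ler_pM2l //; exact: nd.
Qed.

Lemma compat_of_g (v : bool) a t :
  (if v then 0 <= a t.+1 / nn t - tnorm a t else a t.+1 / nn t - tnorm a t <= 0) ->
  compatb v a t.
Proof. by case: v; rewrite /compatb ?subr_ge0 ?subr_le0. Qed.

Lemma refine (P : nat -> Prop) (g : nat -> R) (gb : R) :
  (forall n, exists m, (n <= m)%N /\ P m) -> g m @[m --> \oo] --> gb ->
  exists v : bool, (if v then 0 <= gb else gb <= 0) /\
    forall n, exists m, (n <= m)%N /\ (P m /\ (if v then 0 <= g m else g m <= 0)).
Proof.
move=> H cg; case: (ltgtP gb 0) => hg.
- exists false; split => //.
  have [n1 _ Hn1] := cvgr_lt _ cg _ hg.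
  move=> n; have [m [hm Pm]] := H (maxn n n1).
  exists m; split; first by apply: leq_trans hm; exact: leq_maxl.
  split => //; apply: ltW; apply: Hn1 => /=.
  by apply: leq_trans hm; exact: leq_maxr.
- exists true; split => //.
  have [n1 _ Hn1] := cvgr_gt _ cg _ hg.
  move=> n; have [m [hm Pm]] := H (maxn n n1).
  exists m; split; first by apply: leq_trans hm; exact: leq_maxl.
  split => //; apply: ltW; apply: Hn1 => /=.
  by apply: leq_trans hm; exact: leq_maxr.
- case: (pselect (forall n, exists m, (n <= m)%N /\ (P m /\ 0 <= g m))) => nf.
    by exists true.
  exists false; split => //.
  have [n0 Hn0] : exists n0, forall m, (n0 <= m)%N -> P m -> g m < 0.
    apply: contrapT => hc; apply: nf => n.
    apply: contrapT => hn; apply: hc; exists n => m hm Pm.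
    rewrite ltNge; apply/negP => hgm; apply: hn; exists m; split => //.
  move=> n; have [m [hm Pm]] := H (maxn n n0).
  exists m; split; first by apply: leq_trans hm; exact: leq_maxl.
  split => //; apply: ltW; apply: Hn0 => //.
  by apply: leq_trans hm; exact: leq_maxr.
Qed.
End Aux.

Lemma freq_infinite (P : set nat) :
  (forall n, exists m, (n <= m)%N /\ P m) -> infinite_set P.
Proof.
move=> H /finite_fsetP [X eX].
have [m [hm Pm]] := H (\max_(i <- finmap.enum_fset X) i).+1.
have inX : m \in finmap.enum_fset X by move: Pm; rewrite eX.
have := @leq_bigmax_seq nat _ predT (fun i => i) m inX isT.
by move=> h; move: (leq_trans hm h); rewrite ltnn.
Qed.

Theorem proposition1p10 (R : realType) (X : nat -> completeNormedModType R)
  (xs : nat -> forall k, X k) (x : forall k, X k) :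
  (forall m, inX (xs m)) ->
  (exists C : R, forall m, Xnorm (xs m) <= C) ->
  inX x -> (exists k, x k != 0) ->
  pconv xs x ->
  exists M : set nat, infinite_set M /\
    same_repr ([set xs m | m in M] `|` [set x]).
Proof.
move=> hxs [C hC] hx [k0 hk0] hp.
pose a := fun m k => `|xs m k|.
pose b := fun k => `|x k|.
have a0 : forall m i, 0 <= a m i by move=> m i; exact: normr_ge0.
have b0 : forall i, 0 <= b i by move=> i; exact: normr_ge0.
have [_ Tb] := tnorm_lim _ _ b0 hx.
have Ta : forall m t, tnorm (a m) t <= C.
  move=> m t; have [_ h] := tnorm_lim _ _ (a0 m) (hxs m).
  exact: le_trans (h t) (hC m).
pose B := Num.max C (Xnorm x).
have TaB : forall m t, tnorm (a m) t <= B.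
  by move=> m t; rewrite le_max Ta.
have TbB : forall t, tnorm b t <= B.
  by move=> t; rewrite le_max (Tb t) orbT.
have bk0 : 0 < b k0 by rewrite /b normr_gt0.
have conv : forall i, a m i @[m --> \oo] --> b i.
  move=> i; apply: cvg_norm; apply/subr_cvg0; apply: norm_cvg0; exact: hp.
have [m0 _ Hm0] := cvgr_gt _ (conv k0) (b k0 / 2)
  ltac:(move: bk0; lra).
pose del := b k0 / 4.
have del0 : 0 < del by rewrite /del; move: bk0; lra.
have lowb : forall t, (k0 <= t)%N -> del <= tnorm b t.
  move=> t kt; have := half_le _ _ _ _ b0 kt; rewrite /del; lra.
have lowa : forall m t, (m0 <= m)%N -> (k0 <= t)%N -> del <= tnorm (a m) t.
  move=> m t hm kt; have := half_le _ _ _ _ (a0 m) kt.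
  have := Hm0 m hm; rewrite /del /=; lra.
have B0 : 0 <= B by apply: le_trans (TbB 0%N); exact: tnorm_ge0.
pose N0 := (k0 + Num.bound (2 * B / del))%N.
have tailc : forall c : nat -> R, (forall i, 0 <= c i) ->
    (forall t, tnorm c t <= B) -> (forall t, (k0 <= t)%N -> del <= tnorm c t) ->
    forall t, (N0 <= t)%N -> compatb R false c t.
  move=> c c0 cB cl t ht; rewrite /compatb.
  have kt : (k0 <= t)%N by apply: leq_trans ht; exact: leq_addr.
  have h1 : c t.+1 <= 2 * B.
    apply: le_trans (half_le _ _ _ _ c0 (leqnn _)) _; rewrite ler_pM2l //.
  have h2 : 2 * B / del <= nn R t.
    apply/ltW; apply: lt_le_trans (archi_boundP _) _.
      by apply: divr_ge0; [rewrite mulr_ge0 | exact: ltW].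
    rewrite /nn ler_nat; apply: leq_trans (leq_addl k0 _) _.
    apply: leq_trans ht _; exact: leq_trans (leqnSn t) (leqnSn _).
  have hn : 0 < nn R t by rewrite /nn ltr0n.
  rewrite ler_pdivrMr // in h2.
  rewrite ler_pdivrMr //; apply: le_trans h1 _; apply: le_trans h2 _.
  by rewrite mulrC; apply: ler_wpM2r; [exact: ltW | exact: cl].
have claim : forall j, exists q : nat -> bool,
    (forall t, (t < j)%N -> compatb R (q t) b t) /\
    (forall n, exists m, (n <= m)%N /\ ((m0 <= m)%N /\
       forall t, (t < j)%N -> compatb R (q t) (a m) t)).
  elim => [|j [q [hqb hqa]]].
    exists (fun _ => false); split => // n; exists (maxn n m0).
    split; first exact: leq_maxl.
    by split => //; exact: leq_maxr.
  have cg : (a m j.+1 / nn R j - tnorm (a m) j) @[m --> \oo] -->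
            (b j.+1 / nn R j - tnorm b j).
    apply: cvgB; first by apply: cvgM; [exact: conv | exact: cvg_cst].
    exact: tnorm_cvg _ _ _ conv j.
  have [v [hvb hva]] := refine _ _ _ _ hqa cg.
  exists (fun t => if t == j then v else q t); split.
    move=> t; rewrite ltnS leq_eqVlt; case: eqP => [-> _ | _ /= ht].
      exact: compat_of_g.
    exact: hqb.
  move=> n; have [m [hm [[hm0 hq] hg]]] := hva n.
  exists m; split => //; split => // t.
  rewrite ltnS leq_eqVlt; case: eqP => [-> _ | _ /= ht].
    exact: compat_of_g.
  exact: hq.
have [q [hqb hqa]] := claim N0.
pose p := fun t => if (t < N0)%N then q t else false.
have Hp : forall s, (N0 <= s)%N -> p s = false.
  by move=> s hs; rewrite /p ltnNge hs.
exists (fun m => (m0 <= m)%N /\ forall t, (t < N0)%N -> compatb R (q t) (a m) t).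
split; first exact: freq_infinite hqa.
exists (d R p N0); split; first by move=> k; exact: d_bnd.
move=> z [[m [hm0 hq] <-]|->].
  apply: (series_repr _ _ _ _ (a0 m) (hxs m) _ Hp) => s.
  rewrite /p; case: ltnP => hs; first exact: hq.
  exact: (tailc (a m) (a0 m) (TaB m) (fun t kt => lowa m t hm0 kt) s hs).
apply: (series_repr _ _ _ _ b0 hx _ Hp) => s.
rewrite /p; case: ltnP => hs; first exact: hqb.
exact: (tailc b b0 TbB lowb s hs).
Qed.
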